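(* Let $\mathcal N$ be a finite ground set, $f:2^{\mathcal N}\to\mathbb R$ monotone and submodular, $k\ge1$ an integer, and $O$ an optimal solution to $\max\{f(S):|S|\le k\}$. Consider the following algorithm: initialize $A\leftarrow\emptyset$; for each $u\in\mathcal N$ in turn, if $\Delta(u\mid A)\ge f(A)/k$ then $A\leftarrow A\cup\{u\}$; finally return $A'$, the set of the last $k$ elements added to $A$ (or all of $A$ if fewer than $k$ were added). Then $4f(A')\ge f(O)$.
   Context: $f$ is submodular if $f(T\cup\{x\})-f(T)\le f(S\cup\{x\})-f(S)$ for all $S\subseteq T\subseteq\mathcal N$, $x\notin T$; monotone if $f(S)\le f(T)$ for $S\subseteq T$. $\Delta(x\mid S)=f(S\cup\{x\})-f(S)$. *)

(* Defs.v *)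
From mathcomp Require Import all_boot all_order all_algebra.
Set Implicit Arguments. Unset Strict Implicit. Unset Printing Implicit Defensive.
Import Order.TTheory GRing.Theory Num.Theory.
Local Open Scope ring_scope.

Section Defs.
Variables (R : realFieldType) (T : finType).

Definition monotone_fn (f : {set T} -> R) : Prop :=
  forall S U : {set T}, S \subset U -> f S <= f U.

Definition submodular (f : {set T} -> R) : Prop :=
  forall (S U : {set T}) (x : T), S \subset U -> x \notin U ->
    f (x |: U) - f U <= f (x |: S) - f S.

Definition marg (f : {set T} -> R) (x : T) (S : {set T}) : R :=
  f (x |: S) - f S.

(* One step of the streaming algorithm; the state is the sequence of
   elements added so far, in order of addition. *)
Definition stream_step (f : {set T} -> R) (k : nat) (L : seq T) (u : T)
  : seq T :=
  let A := [set x in L] in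
  if f A / k%:R <= marg f u A then rcons L u else L.

Definition stream_added (f : {set T} -> R) (k : nat) (s : seq T) : seq T :=
  foldl (stream_step f k) [::] s.

Definition stream_output (f : {set T} -> R) (k : nat) (s : seq T)
  : {set T} :=
  let L := stream_added f k s in
  [set x in drop (size L - k) L].

End Defs.

(* Main.v *)
Require Import Defs.
From mathcomp Require Import all_boot all_order all_algebra.
From mathcomp Require Import lra.
Import Order.TTheory GRing.Theory Num.Theory.
Local Open Scope ring_scope.
Set Implicit Arguments.

Lemma set_rcons (T : finType) (L : seq T) u :
  [set x in rcons L u] = u |: [set x in L].
Proof. by apply/setP=> y; rewrite !inE mem_rcons in_cons. Qed.

Lemma inv_stream (R : realFieldType) (T : finType) (f : {set T} -> R) (k : nat) s0 :
  (forall S, 0 <= f S) -> monotone_fn f -> submodular f ->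
  (forall i, (i < size (stream_added f k s0))%N ->
     f [set x in take i (stream_added f k s0)] / k%:R <=
     f [set x in take i.+1 (stream_added f k s0)] - f [set x in take i (stream_added f k s0)]) /\
  (forall x, x \in s0 -> x \notin stream_added f k s0 ->
     marg f x [set y in stream_added f k s0] <= f [set y in stream_added f k s0] / k%:R).
Proof.
move=> f0 mon sub.
elim/last_ind: s0 => [|s u [IH1 IH2]]; first by split => //.
rewrite /stream_added foldl_rcons -/(stream_added f k s) /stream_step.
set L := stream_added f k s in IH1 IH2 *.
have kge : 0 <= k%:R^-1 :> R by rewrite invr_ge0 ler0n.
case: ifP => Hacc.
- split.
  + move=> i; rewrite size_rcons ltnS leq_eqVlt => /orP[/eqP->|Hi].
    * rewrite -cats1 take_size_cat // take_oversize ?size_cat ?addn1 // cats1 set_rcons.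
      exact: Hacc.
    * by rewrite -cats1 (takel_cat _ (ltnW Hi)) (takel_cat _ Hi); exact: IH1.
  + move=> x; rewrite mem_rcons in_cons mem_rcons in_cons negb_or => /orP[->//|xs] /andP[xu xL].
    rewrite set_rcons.
    have H1 := IH2 x xs xL.
    have H2 : marg f x (u |: [set y in L]) <= marg f x [set y in L].
      apply: sub; first exact: subsetUr.
      by rewrite !inE negb_or xu.
    have H3 : f [set y in L] <= f (u |: [set y in L]) by apply: mon; exact: subsetUr.
    have H4 : f [set y in L] / k%:R <= f (u |: [set y in L]) / k%:R by rewrite ler_wpM2r.
    by apply: le_trans H2 (le_trans H1 H4).
- split => // x; rewrite mem_rcons in_cons => /orP[/eqP->|xs] xL; last exact: IH2.
  by apply: ltW; rewrite ltNge Hacc.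
Qed.

Lemma setU1_in (T : finType) (a : T) (A : {set T}) : a \in A -> a |: A = A.
Proof. by move=> aA; apply/setUidPr; rewrite sub1set. Qed.

Lemma set_nil (T : finType) : [set x in [::] : seq T] = set0.
Proof. by apply/setP=> y; rewrite !inE. Qed.

Lemma tail_bound (R : realFieldType) (T : finType) (f : {set T} -> R) :
  monotone_fn f -> submodular f -> forall P Q : seq T,
  f [set x in P ++ Q] - f [set x in P] <= f [set x in Q] - f set0.
Proof.
move=> mon sub P; elim/last_ind => [|Q u IH].
  by rewrite cats0 set_nil !subrr.
rewrite -rcons_cat !set_rcons.
set X := [set x in P ++ Q] in IH *; set Y := [set x in Q] in IH *.
have HYX : Y \subset X by apply/subsetP=> y; rewrite !inE mem_cat => ->; rewrite orbT.
suff H : f (u |: X) - f X <= f (u |: Y) - f Y by lra.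
case: (boolP (u \in X)) => uX.
  rewrite setU1_in // subrr subr_ge0; apply: mon; exact: subsetUr.
exact: sub.
Qed.

Lemma sum_bound (R : realFieldType) (T : finType) (f : {set T} -> R) :
  monotone_fn f -> submodular f -> forall (A : {set T}) (c : R) (Q : seq T),
  (forall x, x \in Q -> marg f x A <= c) ->
  f ([set x in Q] :|: A) - f A <= (size Q)%:R * c.
Proof.
move=> mon sub A c; elim => [|y Q IH] H.
  by rewrite set_nil set0U subrr mul0r.
have eq1 : [set x in y :: Q] :|: A = y |: ([set x in Q] :|: A).
  by apply/setP=> z; rewrite !inE orbA.
rewrite eq1 /= -addn1 natrD mulrDl mul1r.
have H1 : marg f y A <= c by apply: H; rewrite in_cons eqxx.
have H2 := IH (fun x xQ => H x (ltac:(by rewrite in_cons xQ orbT))).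
set Z := [set x in Q] :|: A in H2 *.
suff H3 : f (y |: Z) - f Z <= marg f y A by lra.
case: (boolP (y \in Z)) => yZ.
  rewrite setU1_in // subrr /marg subr_ge0; apply: mon; exact: subsetUr.
by apply: sub => //; exact: subsetUr.
Qed.

Lemma growth_sum (R : realFieldType) (T : finType) (f : {set T} -> R) (k : nat) :
  monotone_fn f -> forall (L : seq T) (j : nat),
  (forall i, (i < size L)%N ->
     f [set x in take i L] / k%:R <=
     f [set x in take i.+1 L] - f [set x in take i L]) ->
  forall n, (j + n <= size L)%N ->
  n%:R * (f [set x in take j L] / k%:R) <=
    f [set x in take (j + n) L] - f [set x in take j L].
Proof.
move=> mon L j G; elim => [|n IH] Hn.
  by rewrite addn0 subrr mul0r.
have Hn' : (j + n < size L)%N by rewrite addnS in Hn.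
have := IH (ltnW Hn') => {}IH.
have := G _ Hn' => G1.
have Hs : f [set x in take j L] <= f [set x in take (j + n) L].
  apply: mon; apply/subsetP => y; rewrite !inE.
  by rewrite -(take_takel _ (leq_addr n j) ) => /mem_take.
have Hs' : f [set x in take j L] / k%:R <= f [set x in take (j + n) L] / k%:R.
  by rewrite ler_wpM2r // invr_ge0 ler0n.
rewrite addnS -addn1 natrD mulrDl mul1r; lra.
Qed.

Theorem theorem4 (R : realFieldType) (T : finType) (f : {set T} -> R)
  (k : nat) (s : seq T) (O : {set T}) :
  (forall S, 0 <= f S) ->
  monotone_fn f -> submodular f ->
  (1 <= k)%N ->
  uniq s -> (forall x : T, x \in s) ->
  (#|O| <= k)%N -> (forall S : {set T}, (#|S| <= k)%N -> f S <= f O) ->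
  f O <= 4%:R * f (stream_output f k s).
Proof.
move=> f0 mon sub k1 _ alls Ok _.
have [G Rej] := inv_stream k s f0 mon sub.
rewrite /stream_output.
set L := stream_added f k s in G Rej *.
set A := [set x in L].
have kpos : 0 < k%:R :> R by rewrite ltr0n.
have kK : forall x : R, k%:R * (x / k%:R) = x.
  by move=> x; rewrite mulrC divfK // gt_eqF.
have cge : 0 <= f A / k%:R by rewrite divr_ge0 // ltW.
have HOA : f O <= 2%:R * f A.
  have Hm : forall x, x \in enum O -> marg f x A <= f A / k%:R.
    move=> x _; case: (boolP (x \in L)) => xL.
      by rewrite /marg setU1_in ?inE // subrr.
    exact: Rej.
  have := sum_bound mon sub _ _ _ Hm; rewrite set_enum -cardE => H1.
  have H2 : f O <= f (O :|: A) by apply: mon; exact: subsetUl.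
  have H3 : #|O|%:R * (f A / k%:R) <= k%:R * (f A / k%:R).
    by rewrite ler_wpM2r // ler_nat.
  rewrite kK in H3; lra.
case: (leqP (size L) k) => Hm.
  have -> : (size L - k = 0)%N by apply/eqP; rewrite subn_eq0.
  rewrite drop0 -/A; have := f0 A; lra.
set j := (size L - k)%N.
have Hj : (j + k = size L)%N by rewrite subnK // ltnW.
have Hg := @growth_sum _ _ f k mon L j G k (eq_leq Hj).
rewrite Hj take_size kK -/A in Hg.
have Ht := tail_bound mon sub (take j L) (drop j L).
rewrite cat_take_drop -/A in Ht.
have := f0 set0; have := f0 A; lra.
Qed.
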